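(* Let $W(x,y,z)\in F(x,y,z)$ be such that for every group $G$ and every $c\in G$ the operation $*_{W,c}$ satisfies the quandle axioms (q1) and (q2). Then there exist $w(y,z)\in F(y,z)$ and $\varepsilon\in\{1,-1\}$ such that $$W(x,y,z)=y\,w(y,z)^{-1}\,y^{-\varepsilon}\,x^{\varepsilon}\,w(y,z).$$
   Context: Quandle axioms for a binary operation $*$ on a set $Q$: (q1) $x*x=x$ for all $x\in Q$; (q2) for every $x\in Q$ the map $y\mapsto y*x$ is a bijection of $Q$. For a word $W(x,y,z)$ in the free group $F(x,y,z)$, a group $G$ and a fixed element $c\in G$, the binary operation $*_{W,c}$ on $G$ is defined by $a*_{W,c}b=W(a,b,c)$. $F(y,z)$ denotes the free group on $y,z$, viewed as a subgroup of $F(x,y,z)$. *)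

(* Defs.v *)
From mathcomp Require Import all_boot all_algebra.
Set Implicit Arguments. Unset Strict Implicit. Unset Printing Implicit Defensive.

Record group := Group {
  gcar :> Type;
  gmul : gcar -> gcar -> gcar;
  gone : gcar;
  ginv : gcar -> gcar;
  gmulA : forall a b c, gmul a (gmul b c) = gmul (gmul a b) c;
  gmul1 : forall a, gmul gone a = a;
  gmulV : forall a, gmul (ginv a) a = gone
}.

Inductive gen3 := gx | gy | gz.

Definition gen3_eqb (a b : gen3) : bool :=
  match a, b with gx, gx | gy, gy | gz, gz => true | _, _ => false end.

(* a letter is a generator together with an exponent sign:
   (g, false) stands for g, (g, true) stands for g^{-1} *)
Definition letter := (gen3 * bool)%type.
Definition word := seq letter.

Definition push (l : letter) (s : word) : word :=
  match s with
  | h :: t => if gen3_eqb h.1 l.1 && (h.2 != l.2) then t else l :: s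
  | [::] => [:: l]
  end.

(* the reduced form of a word; two words define the same element of the
   free group F(x,y,z) iff their reduced forms coincide *)
Definition reduce (w : word) : word := foldr push [::] w.

Definition feq (u v : word) : Prop := reduce u = reduce v.

Definition winv (w : word) : word := rev (map (fun l => (l.1, ~~ l.2)) w).

Definition wgpow (g : gen3) (eps : int) : word :=
  if eps == 1%R then [:: (g, false)] else [:: (g, true)].

Definition in_Fyz (w : word) : bool := all (fun l => ~~ gen3_eqb l.1 gx) w.

Definition gassign (G : group) (a b c : G) (g : gen3) : G :=
  match g with gx => a | gy => b | gz => c end.

Definition weval (G : group) (W : word) (a b c : G) : G :=
  foldr (fun l acc => gmul (if l.2 then ginv (gassign a b c l.1)
                                     else gassign a b c l.1) acc)
        (gone G) W.

Definition wop (G : group) (W : word) (c : G) : G -> G -> G :=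
  fun a b => weval W a b c.

Definition quandle_q1 (Q : Type) (op : Q -> Q -> Q) : Prop :=
  forall x, op x x = x.
Definition quandle_q2 (Q : Type) (op : Q -> Q -> Q) : Prop :=
  forall x, bijective (fun y => op y x).

(* Main.v *)
Require Import Defs.
From HB Require Import structures.
From mathcomp Require Import all_boot all_algebra.
From mathcomp Require fingroup perm.
From mathcomp Require Import zify.
Set Implicit Arguments. Unset Strict Implicit. Unset Printing Implicit Defensive.

Lemma gen3_eqP : Equality.axiom gen3_eqb.
Proof. by case; case; constructor. Qed.
HB.instance Definition _ := hasDecEq.Build gen3 gen3_eqP.

Definition linv (l : letter) : letter := (l.1, ~~ l.2).
Lemma linvK l : linv (linv l) = l.
Proof. by case: l => g b; rewrite /linv /= negbK. Qed.
Lemma linv_neq l : linv l != l.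
Proof. by case: l => g [] ; rewrite /linv /= xpair_eqE /= andbF. Qed.

Lemma push_eq l h t : push l (h :: t) = if h == linv l then t else l :: h :: t.
Proof.
rewrite /push; case: h => g b; case: l => g' b' /=.
rewrite /linv /= xpair_eqE.
have -> : gen3_eqb g g' = (g == g') by [].
by case: b; case: b'.
Qed.

Definition radj (a b : letter) := b != linv a.
Definition redb (w : word) : bool :=
  if w is a :: t then path radj a t else true.

Lemma push_red l s : redb s -> redb (push l s).
Proof.
case: s => [|h t] // Hs; rewrite push_eq.
case: ifP => E.
  by case: t Hs => //= h' t' /andP[].
rewrite /= andbC; apply/andP; split; first exact: Hs.
by rewrite /radj E.
Qed.

Lemma reduce_red w : redb (reduce w).
Proof. by elim: w => //= l t IH; apply: push_red. Qed.

Lemma red_reduce w : redb w -> reduce w = w.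
Proof.
elim: w => //= a t IH Hr.
have Ht : redb t by case: t Hr {IH} => //= b t /andP[].
rewrite IH //; case: t Hr Ht {IH} => // b t Hr _.
case/andP: Hr => Hab _.
by rewrite push_eq (negbTE Hab).
Qed.

Lemma push_cancel l s : redb s -> push (linv l) (push l s) = s.
Proof.
case: s => [|h t] Hs.
  by rewrite [push l _]/= push_eq linvK eqxx.
rewrite push_eq; case: ifP => E.
  move/eqP: E Hs => -> Hs.
  case: t Hs => [|h' t']; first by [].
  case/andP => H1 _; rewrite push_eq.
  by move: H1; rewrite /radj => /negbTE ->.
by rewrite push_eq linvK eqxx.
Qed.

Lemma foldr_push_push s l r : redb s ->
  foldr push s (push l r) = push l (foldr push s r).
Proof.
move=> Hs; case: r => [|h t] //; rewrite push_eq; case: ifP => //= /eqP ->.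
have Hr : redb (foldr push s t) by elim: t {h} => //= ? ? ?; apply: push_red.
by rewrite -{1}(linvK l) push_cancel.
Qed.

Lemma foldr_red_reduce s u : redb s -> foldr push s (reduce u) = foldr push s u.
Proof. move=> Hs; elim: u => //= l t IH; by rewrite foldr_push_push // IH. Qed.

Lemma reduce_cat u v : reduce (u ++ v) = foldr push (reduce v) u.
Proof. by rewrite /reduce foldr_cat. Qed.

Lemma reduceAl u v : reduce (reduce u ++ v) = reduce (u ++ v).
Proof. by rewrite !reduce_cat foldr_red_reduce // reduce_red. Qed.
Lemma reduceAr u v : reduce (u ++ reduce v) = reduce (u ++ v).
Proof. by rewrite !reduce_cat (red_reduce (reduce_red v)). Qed.

Lemma winv_cons l t : winv (l :: t) = winv t ++ [:: linv l].
Proof. by rewrite /winv /= rev_cons cats1. Qed.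

Lemma winv_foldr s u : redb s -> foldr push (foldr push s u) (winv u) = s.
Proof.
move=> Hs; elim: u => //= l t IH.
have Hr : redb (foldr push s t) by elim: t {IH} => //= ? ? ?; apply: push_red.
by rewrite winv_cons foldr_cat /= push_cancel.
Qed.

Lemma reduce_winv u : reduce (winv u ++ u) = [::].
Proof. by rewrite reduce_cat; apply: winv_foldr. Qed.
Lemma winvK u : winv (winv u) = u.
Proof.
rewrite /winv map_rev revK -map_comp.
by rewrite map_id_in // => -[g b] _; rewrite /= negbK.
Qed.
Lemma reduce_winv' u : reduce (u ++ winv u) = [::].
Proof. by rewrite -{1}(winvK u) reduce_winv. Qed.

Definition Fcar := {w : word | redb w}.
Definition Fmul (a b : Fcar) : Fcar := exist _ (reduce (val a ++ val b)) (reduce_red _).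
Definition Finv (a : Fcar) : Fcar := exist _ (reduce (winv (val a))) (reduce_red _).
Definition Fone : Fcar := exist _ [::] isT.

Lemma FmulA a b c : Fmul a (Fmul b c) = Fmul (Fmul a b) c.
Proof. apply: val_inj => /=; by rewrite reduceAr reduceAl catA. Qed.
Lemma Fmul1 a : Fmul Fone a = a.
Proof. apply: val_inj => /=; by rewrite red_reduce //; case: a. Qed.
Lemma FmulV a : Fmul (Finv a) a = Fone.
Proof. apply: val_inj => /=; by rewrite reduceAl reduce_winv. Qed.

Definition Fgrp : Defs.group := @Defs.Group Fcar Fmul Fone Finv FmulA Fmul1 FmulV.

Section GL.
Variable G : Defs.group.
Implicit Types a b c : G.
Local Notation "a * b" := (gmul a b).
Local Notation "1" := (gone G).

Lemma gmulV' a : a * ginv a = 1.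
Proof.
have H : ginv a * (a * ginv a) = ginv a by rewrite gmulA gmulV gmul1.
by rewrite -[a * _]gmul1 -{1}(gmulV (ginv a)) -gmulA H gmulV.
Qed.
Lemma gmul1' a : a * 1 = a.
Proof. by rewrite -(gmulV a) gmulA gmulV' gmul1. Qed.
Lemma inv_uniq a b : b * a = 1 -> b = ginv a.
Proof. by move=> H; rewrite -[b]gmul1' -(gmulV' a) gmulA H gmul1. Qed.
Lemma ginvK a : ginv (ginv a) = a.
Proof. by apply/esym/inv_uniq; rewrite gmulV'. Qed.
Lemma inv1 : ginv 1 = 1.
Proof. by apply/esym/inv_uniq; rewrite gmul1. Qed.

Variables a b c : G.
Definition lv (l : letter) : G :=
  if l.2 then ginv (gassign a b c l.1) else gassign a b c l.1.
Lemma weval_cons l t : weval (l :: t) a b c = lv l * weval t a b c.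
Proof. by []. Qed.
Lemma weval_nil : weval [::] a b c = 1.
Proof. by []. Qed.
Lemma lv_linv l : lv (linv l) = ginv (lv l).
Proof. by case: l => g [] //=; rewrite /lv /= ginvK. Qed.
Lemma weval_cat u v : weval (u ++ v) a b c = weval u a b c * weval v a b c.
Proof.
elim: u => [|l t IH] /=; first by rewrite gmul1.
by rewrite IH gmulA.
Qed.
Lemma weval_push l s : weval (push l s) a b c = lv l * weval s a b c.
Proof.
case: s => [|h t]; first by [].
rewrite push_eq; case: ifP => // /eqP ->.
by rewrite weval_cons lv_linv gmulA gmulV' gmul1.
Qed.
Lemma weval_reduce w : weval (reduce w) a b c = weval w a b c.
Proof. by elim: w => //= l t IH; rewrite weval_push IH. Qed.
Lemma weval_winv w : weval (winv w) a b c = ginv (weval w a b c).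
Proof.
apply: inv_uniq; rewrite -weval_cat -weval_reduce reduce_winv //.
Qed.

Definition ev (A : Fgrp) : G := weval (val A) a b c.
Lemma ev_mul A B : ev (gmul A B) = ev A * ev B.
Proof. by rewrite /ev /= weval_reduce weval_cat. Qed.
Lemma ev_inv A : ev (ginv A) = ginv (ev A).
Proof. by rewrite /ev /= weval_reduce weval_winv. Qed.
Lemma ev_one : ev (gone Fgrp) = 1.
Proof. by []. Qed.
End GL.

Lemma weval_hom (G : Defs.group) (a b c : G) W (A B C : Fgrp) :
  ev a b c (weval W A B C) = weval W (ev a b c A) (ev a b c B) (ev a b c C).
Proof.
elim: W => [|l t IH] //=.
rewrite ev_mul IH; congr (gmul _ _).
by case: l => [[] []] //=; rewrite ev_inv.
Qed.

Definition Fx : Fgrp := exist _ [:: (gx, false)] isT.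
Definition Fy : Fgrp := exist _ [:: (gy, false)] isT.
Definition Fz : Fgrp := exist _ [:: (gz, false)] isT.
Lemma ev_gen (G : Defs.group) (a b c : G) :
  [/\ ev a b c Fx = a, ev a b c Fy = b & ev a b c Fz = c].
Proof. by rewrite /ev /= !gmul1'. Qed.


Lemma obstruction W :
  (forall (G : Defs.group) (c : G), quandle_q2 (wop W c)) ->
  forall (G : Defs.group) (X Y Z : G),
  exists V : word, weval V (weval W X Y Z) Y Z = X.
Proof.
move=> H G X Y Z.
have [g gK Kg] := H Fgrp Fz Fy.
set f := (fun y : Fgrp => wop W Fz y Fy) in gK Kg.
set Vel := g Fx.
set Wel := weval W Fx Fy Fz.
have fV : f Vel = Fx by rewrite /Vel Kg.
have E1 : ev Wel Fy Fz Vel = Fx.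
  apply: (can_inj gK).
  have := weval_hom Wel Fy Fz W Vel Fy Fz.
  have [_ -> ->] := ev_gen Wel Fy Fz.
  rewrite /f /wop => <-.
  have fV' : weval W Vel Fy Fz = Fx := fV.
  by rewrite fV'; case: (ev_gen Wel Fy Fz).
exists (val Vel).
have := weval_hom X Y Z (val Vel) Wel Fy Fz.
have [_ -> ->] := ev_gen X Y Z.
have E1' : weval (val Vel) Wel Fy Fz = Fx := E1.
have [EX EY EZ] := ev_gen X Y Z.
rewrite E1' EX => HX.
by rewrite [in RHS]HX /Wel weval_hom EX EY EZ.
Qed.

Module PermPart.
Import fingroup perm.
Local Open Scope group_scope.

Definition PG (T : finType) : Defs.group :=
  @Defs.Group {perm T} mulg 1 invg (@mulgA _) (@mul1g _) (@mulVg _).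

Definition pap (T : finType) (g : PG T) : T -> T := fun x => (g : {perm T}) x.

Lemma weval_fixP (T : finType) (X Y Z : PG T) (om : T) (w : word) :
  (forall l, l \in w -> pap (gassign X Y Z l.1) om = om) ->
  pap (weval w X Y Z) om = om.
Proof.
rewrite /pap; elim: w => [|l t IH] H /=; first by rewrite perm1.
have Hl := H l (mem_head _ _).
rewrite permM.
have -> : (if l.2 then (gassign X Y Z l.1 : {perm T})^-1 else gassign X Y Z l.1 : {perm T}) om = om.
  by case: (l.2) => //; rewrite -{1}Hl permK.
by apply: IH => l' Hl'; apply: H; rewrite inE Hl' orbT.
Qed.

Lemma perm_extend (T : finType) (L : seq (T * T)) :
  {in L &, forall p q, (p.1 == q.1) = (p.2 == q.2)} ->
  exists s : {perm T}, forall p, p \in L -> s p.1 = p.2.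
Proof.
elim: L => [|p L IH] HL.
  by exists 1.
have HL' : {in L &, forall p q, (p.1 == q.1) = (p.2 == q.2)}.
  by move=> q r Hq Hr; apply: HL; rewrite inE ?Hq ?Hr orbT.
have [s Hs] := IH HL'.
case: (boolP (p \in L)) => pL.
  exists s => q; rewrite inE => /orP[/eqP ->|]; [exact: Hs | exact: Hs].
exists (s * tperm (s p.1) p.2) => q; rewrite inE => /orP[/eqP ->|qL].
  by rewrite permM tpermL.
have Hp : p \in p :: L by rewrite mem_head.
have Hq : q \in p :: L by rewrite inE qL orbT.
have Hpq := HL p q Hp Hq.
rewrite permM Hs // tpermD //.
  apply/negP => /eqP E; move: E; rewrite -(Hs q qL) => /perm_inj E.
  have : q.2 == p.2 by rewrite eq_sym -Hpq E.
  move=> /eqP E2; move: pL; suff -> : p = q by rewrite qL.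
  by clear -E E2; destruct p, q; simpl in *; congruence.
apply/negP => /eqP E.
have := Hpq; rewrite E eqxx => /eqP E1.
move: pL; suff -> : p = q by rewrite qL.
by clear -E E1; destruct p, q; simpl in *; congruence.
Qed.

End PermPart.

Section Graph.
Variables (c : nat -> letter) (m s : nat).
Hypothesis Hadj : forall i, i.+1 < m -> c i.+1 != linv (c i).
Hypothesis H0x : (c 0).1 = gx.
Hypothesis Hlx : (c m.-1).1 = gx.
Hypothesis Hm : 2 <= m.
Hypothesis S1 : s + s < m.
Hypothesis S2 : forall j, j < s -> c (m - j.+1) = linv (c j).
Hypothesis S3 : s.+1 + s.+1 <= m -> c (m - s.+1) != linv (c s).

Definition hedge := (nat * letter * nat)%type.
Definition NN := m - s.
Definition Eg : seq hedge :=
  [seq (i, c i, i.+1) | i <- iota 0 NN.-1] ++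
  [:: (NN.-1, c NN.-1, s); (0, (gy, false), 0); (0, (gz, false), 0)].
Definition rev3 (h : hedge) : hedge := (h.2, linv h.1.2, h.1.1).
Lemma rev3K h : rev3 (rev3 h) = h.
Proof. by case: h => [[a l] b]; rewrite /rev3 /= linvK. Qed.
Definition Hg := Eg ++ map rev3 Eg.

Lemma rev3_mem h : h \in Hg -> rev3 h \in Hg.
Proof.
rewrite /Hg mem_cat => /orP[H|H]; rewrite mem_cat.
  by rewrite (map_f rev3 H) orbT.
by move/mapP: H => [h' H' ->]; rewrite rev3K H'.
Qed.

Lemma memE a l b : (a, l, b) \in Eg ->
  [\/ exists2 i, i < NN.-1 & [/\ a = i, l = c i & b = i.+1],
      [/\ a = NN.-1, l = c NN.-1 & b = s] |
      [/\ a = 0, b = 0 & l.1 != gx]].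
Proof.
rewrite /Eg mem_cat => /orP[/mapP [i Hi [-> -> ->]]|].
  by apply: Or31; exists i => //; move: Hi; rewrite mem_iota; lia.
rewrite !inE => /orP[/eqP [-> -> ->]|/orP[/eqP [-> -> ->]|/eqP [-> -> ->]]].
- by apply: Or32.
- by apply: Or33.
- by apply: Or33.
Qed.

Lemma memH a l b : (a, l, b) \in Hg ->
  [\/ exists2 i, i < NN.-1 & [/\ a = i, l = c i & b = i.+1],
      exists2 i, i < NN.-1 & [/\ a = i.+1, l = linv (c i) & b = i],
      [/\ a = NN.-1, l = c NN.-1 & b = s] |
      [\/ [/\ a = s, l = linv (c NN.-1) & b = NN.-1] |
      [/\ a = 0, b = 0 & l.1 != gx]]].
Proof.
rewrite /Hg mem_cat => /orP[/memE [H|H|H]|/mapP [[[a' l'] b'] H' E]].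
- by apply: Or41.
- by apply: Or43.
- by apply: Or44; right.
move: E; rewrite /rev3 /= => -[-> -> ->].
case/memE: H' => [[i Hi [-> -> ->]]|[-> -> ->]|[-> -> Hl]].
- by apply: Or42; exists i.
- by apply: Or44; left.
- by apply: Or44; right; split.
Qed.

Lemma NN_ge2 : 2 <= NN.
Proof. rewrite /NN; lia. Qed.

Lemma S3_contra : s < NN.-1 -> c s = linv (c NN.-1) -> False.
Proof.
move=> Hs E.
have H : s.+1 + s.+1 <= m by rewrite /NN in Hs; lia.
move: (S3 H).
have -> : m - s.+1 = NN.-1 by rewrite /NN; lia.
by rewrite E linvK eqxx.
Qed.

Lemma S2_contra i : i.+1 = s -> linv (c i) = linv (c NN.-1) -> False.
Proof.
move=> Hi E.
have H : i < s by lia.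
move: (S2 H).
have -> : m - i.+1 = NN.-1.+1 by rewrite /NN; lia.
rewrite E => E3.
have H2 : NN.-1.+1 < m by rewrite /NN; lia.
by move: (Hadj H2); rewrite E3 eqxx.
Qed.

Lemma det a l b a' b' : (a, l, b) \in Hg -> (a', l, b') \in Hg -> a = a' -> b = b'.
Proof.
have N2 := NN_ge2.
have NNm : NN <= m by rewrite /NN; lia.
move=> /memH H1 /memH H2 Ea; subst a'.
case: H1 => [[i Hi [E1 El E2]]|[i Hi [E1 El E2]]|[E1 El E2]|[[E1 El E2]|[E1 E2 Hl]]];
case: H2 => [[j Hj [E3 El' E4]]|[j Hj [E3 El' E4]]|[E3 El' E4]|[[E3 El' E4]|[E3 E4 Hl']]];
  subst; try (by lia); try (by congruence).
all: exfalso.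
- by move/eqP: El'; apply/negP; apply: Hadj; lia.
- exact: (S3_contra Hi El').
- by move: Hl'; rewrite H0x.
- by move/esym/eqP: El'; apply/negP; apply: Hadj; lia.
- by apply: (negP (Hadj (i := i) _)); [lia| rewrite E3 -El' eqxx].
- exact: (S2_contra E3 El').
- by apply: (negP (Hadj (i := j) _)); [lia| rewrite -E3 El' eqxx].
- exact: (S3_contra Hj (esym El')).
- exact: (S2_contra (esym E3) (esym El')).
- by move: Hl'; rewrite /NN E3 subn0 /= Hlx.
- by move: Hl; rewrite H0x.
- by move: Hl; rewrite /NN -E3 subn0 /= Hlx.
Qed.

Definition vt k := if k < NN then k else m - k.

Lemma tf_mem i : i < NN.-1 -> (i, c i, i.+1) \in Hg.
Proof.
move=> Hi; rewrite /Hg mem_cat; apply/orP; left.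
rewrite /Eg mem_cat; apply/orP; left.
by apply: (map_f (fun i => (i, c i, i.+1))); rewrite mem_iota; lia.
Qed.

Lemma E_mem h : h \in Eg -> h \in Hg.
Proof. by move=> H; rewrite /Hg mem_cat H. Qed.

Lemma walk k : k < m -> (vt k, c k, vt k.+1) \in Hg.
Proof.
move=> Hk; have NNm : NN <= m by rewrite /NN; lia.
have N2 := NN_ge2.
rewrite /vt.
case: (ltnP k.+1 NN) => H1.
  rewrite (ltnW H1); apply: tf_mem; lia.
case: (ltnP k NN) => H2.
  have Ek : k = NN.-1 by lia.
  have -> : m - k.+1 = s by rewrite /NN in Ek *; lia.
  by apply: E_mem; rewrite /Eg mem_cat Ek !inE eqxx orbT.
set i := m - k.+1.
have Hi : i < s by rewrite /i /NN in H2 *; lia.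
have -> : m - k = i.+1 by rewrite /i; lia.
have -> : c k = linv (c i).
  rewrite -S2 //; congr c; rewrite /i /NN in H2 *; lia.
have Hi' : i < NN.-1 by rewrite /NN; lia.
exact: (rev3_mem (tf_mem Hi')).
Qed.

Lemma vt0 : vt 0 = 0.
Proof. rewrite /vt; have := NN_ge2; case: ifP => // H; lia. Qed.
Lemma vtm : vt m = 0.
Proof. rewrite /vt; case: ifP => H; [rewrite /NN in H; lia | by rewrite subnn]. Qed.

Lemma loop_mem g : g != gx -> (0, (g, false), 0) \in Hg.
Proof.
move=> Hg'; apply: E_mem; rewrite /Eg mem_cat; apply/orP; right.
by case: g Hg' => // _; rewrite !in_cons eqxx ?orbT.
Qed.

Lemma Hg_bound a l b : (a, l, b) \in Hg -> a < m /\ b < m.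
Proof.
have N2 := NN_ge2; have NNm : NN <= m by rewrite /NN; lia.
case/memH => [[i Hi [-> _ ->]]|[i Hi [-> _ ->]]|[-> _ ->]|[[-> _ ->]|[-> -> _]]]; lia.
Qed.

End Graph.

Lemma stem_exists (c : nat -> letter) m :
  (forall i, i.+1 < m -> c i.+1 != linv (c i)) -> 0 < m ->
  exists s, [/\ s + s < m, (forall j, j < s -> c (m - j.+1) = linv (c j)) &
    (s.+1 + s.+1 <= m -> c (m - s.+1) != linv (c s))].
Proof.
move=> Hadj Hm.
pose P s := (s + s < m) && all (fun j => c (m - j.+1) == linv (c j)) (iota 0 s).
have exP : exists s, P s by exists 0; rewrite /P /= andbT.
have ubP : forall i, P i -> i <= m by move=> i /andP[H _]; lia.
case: (ex_maxnP exP ubP) => s /andP[Hs1 Hs2] Hmax.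
exists s; split => //.
  by move=> j Hj; apply/eqP; move/allP: Hs2; apply; rewrite mem_iota; lia.
move=> H.
case: (ltnP (s.+1 + s.+1) m) => H2.
  have : ~~ P s.+1 by apply/negP => /Hmax; lia.
  rewrite /P H2 andTb.
  have -> : iota 0 s.+1 = iota 0 s ++ [:: s] by rewrite -addn1 iotaD.
  by rewrite all_cat Hs2 /= andbT.
have -> : m - s.+1 = s.+1 by lia.
apply: Hadj; lia.
Qed.

Module Core.
Import fingroup perm PermPart.
Local Open Scope group_scope.

Lemma redb_adj (C : word) : redb C ->
  forall i, i.+1 < size C -> nth (gx,false) C i.+1 != linv (nth (gx,false) C i).
Proof.
case: C => [|a t] //= /(pathP (gx,false)) H i Hi.
by have := H i Hi.
Qed.

Lemma core_obstruction (u0 C un : word) :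
  in_Fyz u0 -> in_Fyz un -> redb C -> 2 <= size C ->
  (nth (gx,false) C 0).1 = gx -> (nth (gx,false) C (size C).-1).1 = gx ->
  exists (T : finType) (X Y Z : PG T) (om : T),
   [/\ pap Y om = om, pap Z om = om,
       pap (weval (u0 ++ C ++ un) X Y Z) om = om & pap X om != om].
Proof.
move=> Hu0 Hun HC Hm H0x Hlx.
set m := size C in Hm Hlx.
pose c i := nth (gx,false) C i.
have Hadj : forall i, i.+1 < m -> c i.+1 != linv (c i) by exact: redb_adj.
have [s [S1 S2 S3]] := stem_exists Hadj (ltnW Hm).
pose HH := Hg c m s.
pose iv (k : nat) : 'I_m.+1 := inord k.
have ivK : forall k, k < m -> val (iv k) = k by move=> k Hk; apply: inordK; lia.
have Hdet := det Hadj H0x Hlx Hm S1 S2 S3.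
have Hbd := Hg_bound Hm S1 S3.
have ext : forall g : gen3, exists sg : {perm 'I_m.+1},
    forall a b, (a, (g, false), b) \in HH -> sg (iv a) = iv b.
  move=> g.
  pose L := [seq (iv h.1.1, iv h.2) | h <- HH & h.1.2 == (g, false)].
  have [sg Hsg] : exists sg : {perm 'I_m.+1}, forall p, p \in L -> sg p.1 = p.2.
    apply: perm_extend => p q /mapP [[[a l] b] Hp ->] /mapP [[[a' l'] b'] Hq ->] /=.
    move: Hp Hq; rewrite !mem_filter /= => /andP [/eqP El Hp] /andP [/eqP El' Hq].
    subst l l'.
    have [Ha Hb] := Hbd _ _ _ Hp; have [Ha' Hb'] := Hbd _ _ _ Hq.
    have -> : (iv a == iv a') = (a == a').
      by apply/eqP/eqP => [E|->]; [rewrite -(ivK a) // -(ivK a') // E|].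
    have -> : (iv b == iv b') = (b == b').
      by apply/eqP/eqP => [E|->]; [rewrite -(ivK b) // -(ivK b') // E|].
    apply/eqP/eqP => E.
      by apply: (Hdet a (g,false) b a' b') => //; rewrite E.
    have Rp := rev3_mem Hp; have Rq := rev3_mem Hq.
    rewrite /rev3 /= in Rp Rq; subst b'.
    by apply: (Hdet b (linv (g,false)) a b a').
  exists sg => a b H; apply: (Hsg (iv a, iv b)).
  by apply/mapP; exists (a, (g,false), b) => //; rewrite mem_filter eqxx.
have [sx Hx] := ext gx.
have [sy Hy] := ext gy.
have [sz Hz] := ext gz.
pose X : PG 'I_m.+1 := sx.
pose Y : PG 'I_m.+1 := sy.
pose Z : PG 'I_m.+1 := sz.
have act : forall a l b, (a, l, b) \in HH ->
    pap (lv X Y Z l) (iv a) = iv b.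
  move=> a [g e] b H.
  have Hs : forall sg : {perm 'I_m.+1},
      (forall a b, (a, (g, false), b) \in HH -> sg (iv a) = iv b) ->
      pap (if e then ginv (sg : PG 'I_m.+1) else (sg : PG 'I_m.+1)) (iv a) = iv b.
    move=> sg Hsg; case: e H => H; rewrite /pap /=.
      have := rev3_mem H; rewrite /rev3 /= => /Hsg <-.
      by rewrite permK.
    exact: Hsg.
  by rewrite /lv /=; case: g H Hs => H Hs; apply: Hs.
have iv01 : iv 1%N != iv 0.
  apply/negP => /eqP E; have := congr1 val E; rewrite !ivK //; lia.
have Hwalk : forall n k, k + n = m ->
    pap (weval (drop k C) X Y Z) (iv (vt m s k)) = iv (vt m s m).
  elim => [|n IH] k Hk.
    have -> : k = m by lia.
    by rewrite drop_size /pap /= perm1.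
  have Hkm : k < m by lia.
  rewrite (drop_nth (gx,false)) // weval_cons /pap /= permM.
  have := act _ _ _ (walk Hm S1 S2 S3 Hkm).
  rewrite /pap => ->.
  by apply: IH; lia.
have WC : pap (weval C X Y Z) (iv 0) = iv 0.
  have := Hwalk m 0 (add0n m).
  by rewrite drop0 (vt0 Hm S1 S3) (vtm Hm S1 S3).
have HY : pap Y (iv 0) = iv 0.
  by have := act _ _ _ (loop_mem c m s (g := gy) isT).
have HZ : pap Z (iv 0) = iv 0.
  by have := act _ _ _ (loop_mem c m s (g := gz) isT).
have Hfree : forall u : word, in_Fyz u -> pap (weval u X Y Z) (iv 0) = iv 0.
  move=> u Hu; apply: weval_fixP => l Hl.
  move/allP: Hu => /(_ l Hl).
  by case: l Hl => [[] e] //= _ _.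
exists ('I_m.+1 : finType), X, Y, Z, (iv 0); split => //.
  rewrite weval_cat weval_cat /pap /= !permM.
  have := Hfree u0 Hu0; rewrite /pap => ->.
  have := WC; rewrite /pap => ->.
  by have := Hfree un Hun; rewrite /pap => ->.
have N2 := NN_ge2 Hm S1 S3.
have H0 : 0 < (NN m s).-1 by lia.
have := act _ _ _ (tf_mem Hm S1 S3 H0).
rewrite /c; case E0: (nth (gx,false) C 0) => [g e].
rewrite E0 /= in H0x; subst g.
case: e E0 => E0 /=; rewrite /lv /= /pap /=.
  move=> E1; apply/negP => /eqP E2.
  move: iv01; rewrite -E1 -{1}E2 permK eqxx //.
by move=> ->.
Qed.

End Core.

Definition isx (l : letter) : bool := gen3_eqb l.1 gx.

Lemma take_find_all (a : pred letter) s : all (predC a) (take (find a s) s).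
Proof. by elim: s => //= x s IH; case: ifP => //= ->. Qed.

Lemma redb_catl u v : redb (u ++ v) -> redb u.
Proof. case: u => //= a t; rewrite cat_path => /andP[]. done. Qed.
Lemma redb_catr u v : redb (u ++ v) -> redb v.
Proof.
case: u => //= a t; rewrite cat_path => /andP[_].
by case: v => //= b v /andP[].
Qed.

Lemma weval_free (G : Defs.group) (a a' b c : G) u : in_Fyz u ->
  weval u a b c = weval u a' b c.
Proof.
elim: u => //= l t IH /andP [Hl Ht]; rewrite IH //.
by case: l Hl => [[] e].
Qed.

Module Contra.
Import fingroup perm PermPart.
Local Open Scope group_scope.

Lemma contra W : (forall (G : Defs.group) (c : G), quandle_q2 (wop W c)) ->
  forall (T : finType) (X Y Z : PG T) om,
  pap Y om = om -> pap Z om = om -> pap (weval W X Y Z) om = om -> pap X om = om.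
Proof.
move=> H T X Y Z om HY HZ HW.
have [V HV] := obstruction H X Y Z.
rewrite -HV; apply: weval_fixP => -[[] e] _ //=.
Qed.

Lemma no_x W : (forall (G : Defs.group) (c : G), quandle_q2 (wop W c)) ->
  in_Fyz W -> False.
Proof.
move=> H Hf.
pose X : PG 'I_2 := tperm (ord0 : 'I_2) (ord_max : 'I_2).
have := @contra W H 'I_2 X (1 : PG 'I_2) (1 : PG 'I_2) (ord0 : 'I_2).
rewrite /pap /= !perm1 tpermL => /(_ erefl erefl).
have -> : (weval W X 1 1 : {perm 'I_2}) ord0 = ord0.
  apply: weval_fixP => l Hl.
  move/allP: Hf => /(_ l Hl).
  by case: l Hl => [[] e] //= _ _; rewrite /pap perm1.
by move=> /(_ erefl).
Qed.

Lemma multi_x W u0 C un : (forall (G : Defs.group) (c : G), quandle_q2 (wop W c)) ->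
  W = u0 ++ C ++ un ->
  in_Fyz u0 -> in_Fyz un -> redb C -> 2 <= size C ->
  (nth (gx,false) C 0).1 = gx -> (nth (gx,false) C (size C).-1).1 = gx -> False.
Proof.
move=> H EW H1 H2 H3 H4 H5 H6.
have [T [X [Y [Z [om [HY HZ HW HX]]]]]] := Core.core_obstruction H1 H2 H3 H4 H5 H6.
have := @contra W H T X Y Z om HY HZ; rewrite EW => /(_ HW) E.
by rewrite E eqxx in HX.
Qed.
End Contra.

Lemma alg (G : Defs.group) (U0 Xe Ye Un y : G) :
  gmul U0 (gmul Ye Un) = y ->
  gmul U0 (gmul Xe Un) = gmul y (gmul (ginv Un) (gmul (ginv Ye) (gmul Xe Un))).
Proof.
move=> H.
have E : U0 = gmul y (gmul (ginv Un) (ginv Ye)).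
  rewrite -H -!gmulA (gmulA Un) gmulV' gmul1 gmulV' gmul1' //.
by rewrite E -!gmulA.
Qed.

Lemma weval_elt w : val (weval w Fx Fy Fz) = reduce w.
Proof.
elim: w => [|l t IH] //.
have -> : val (weval (l :: t) Fx Fy Fz) =
  reduce (val (lv Fx Fy Fz l) ++ val (weval t Fx Fy Fz)) by [].
rewrite IH reduceAr.
by case: l => [[] []]; reflexivity.
Qed.

Lemma success W u0 e un :
  (forall (G : Defs.group) (c : G), quandle_q1 (wop W c)) ->
  W = u0 ++ (gx, e) :: un -> redb W -> in_Fyz u0 -> in_Fyz un ->
  W = reduce ([:: (gy, false)] ++ winv un ++ wgpow gy (- (if e then (-1)%R else 1%R))%R
              ++ wgpow gx (if e then (-1)%R else 1%R) ++ un).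
Proof.
move=> H EW HW Hu0 Hun.
have q1 := H Fgrp Fz Fy; rewrite /wop in q1.
rewrite -[LHS](red_reduce HW) -!weval_elt; congr val.
rewrite EW weval_cat weval_cons in q1 *.
rewrite (weval_free Fy Fx _ _ Hu0) (weval_free Fy Fx _ _ Hun) in q1.
rewrite !weval_cat weval_winv.
have F1 : forall a : Fgrp, Fmul a Fone = a := @gmul1' Fgrp.
clear EW; case: e q1 => q1; rewrite /wgpow /= !F1.
  have := @alg Fgrp _ (Finv Fx) _ _ _ q1.
  have E : Finv (lv Fy Fy Fz (gx,true)) = Fy := @ginvK Fgrp Fy.
  by rewrite /= E.
have := @alg Fgrp _ Fx _ _ _ q1.
by [].
Qed.

Lemma in_FyzE u : in_Fyz u = ~~ has isx u.
Proof. by elim: u => //= l t IH; rewrite /in_Fyz /= in IH *; rewrite IH negb_or. Qed.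

Lemma take_find_Fyz s : in_Fyz (take (find isx s) s).
Proof. by elim: s => //= x s IH; rewrite /isx; case: ifP => //= ->. Qed.

Lemma isx_gx l : isx l -> l.1 = gx.
Proof. by case: l => [[] e]. Qed.

Theorem mainTheorem3 (W : word) :
  (forall (G : group) (c : G),
      quandle_q1 (wop W c) /\ quandle_q2 (wop W c)) ->
  exists (w : word) (eps : int),
    in_Fyz w /\ (eps = 1%R \/ eps = (-1)%R) /\
    feq W ([:: (gy, false)] ++ winv w ++ wgpow gy (- eps)%R
              ++ wgpow gx eps ++ w).
Proof.
move=> H.
set W' := reduce W.
have HW' : redb W' := reduce_red W.
have Hev : forall (G : Defs.group) (a b c : G), weval W' a b c = weval W a b c.
  by move=> G a b c; apply: weval_reduce.
have H1 : forall (G : Defs.group) (c : G), quandle_q1 (wop W' c).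
  by move=> G c x; rewrite /wop Hev; apply: (H G c).1.
have H2 : forall (G : Defs.group) (c : G), quandle_q2 (wop W' c).
  by move=> G c x; apply: (eq_bij ((H G c).2 x)) => y; rewrite /wop Hev.
rewrite /feq -/W'.
have [Hx|Hx] := boolP (has isx W'); last first.
  exfalso; apply: (Contra.no_x H2).
  by rewrite in_FyzE Hx.
set i0 := find isx W'.
have Hi0 : i0 < size W' by rewrite -has_find.
have Hu0 : in_Fyz (take i0 W') := take_find_Fyz W'.
have ED : drop i0 W' = nth (gx,false) W' i0 :: drop i0.+1 W' by apply: drop_nth.
set a := nth (gx,false) W' i0 in ED.
have Ha : isx a := nth_find _ Hx.
set rest := drop i0.+1 W' in ED.
have EW : W' = take i0 W' ++ a :: rest by rewrite -ED cat_take_drop.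
have [Hr|Hr] := boolP (has isx rest); last first.
  have Hrest : in_Fyz rest by rewrite in_FyzE Hr.
  case Ea : a Ha EW => [g e] Ha EW.
  have Eg := isx_gx Ha; simpl in Eg; subst g.
  exists rest, (if e then (-1)%R else 1%R); split => //; split; first by case: (e); [right|left].
  by rewrite {1}(success H1 EW HW' Hu0 Hrest).
exfalso.
set D := a :: rest in EW.
set rD := rev D.
set k := find isx rD.
have HrD : has isx rD by rewrite has_rev /D /= Ha.
have Hk : k < size rD by rewrite -has_find.
set un := rev (take k rD).
set C := rev (drop k rD).
have EDC : D = C ++ un by rewrite /C /un -rev_cat cat_take_drop revK.
have Hun : in_Fyz un by rewrite /un in_FyzE has_rev -in_FyzE; exact: take_find_Fyz.
have EW2 : W' = take i0 W' ++ C ++ un by rewrite {1}EW -EDC.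
have HC : redb C.
  by move: HW'; rewrite EW2 => /redb_catr /redb_catl.
have cnt_un : count isx un = 0.
  by apply/eqP; rewrite -leqn0 leqNgt -has_count -in_FyzE.
have HsC : 2 <= size C.
  have : 2 <= count isx D by rewrite /D /= Ha /= add1n ltnS -has_count.
  rewrite EDC count_cat cnt_un addn0 => H3.
  exact: (leq_trans H3 (count_size _ _)).
have H0 : (nth (gx,false) C 0).1 = gx.
  apply: isx_gx.
  have : nth (gx,false) D 0 = a by [].
  by rewrite EDC nth_cat (leq_trans _ HsC) // => ->.
have Hl : (nth (gx,false) C (size C).-1).1 = gx.
  apply: isx_gx.
  rewrite /C nth_rev; last by rewrite size_rev; move: HsC; rewrite /C size_rev; lia.
  rewrite size_rev.
  have -> : size (drop k rD) - (size (drop k rD)).-1.+1 = 0.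
    move: HsC; rewrite /C size_rev; lia.
  rewrite nth_drop addn0; exact: nth_find.
exact: (Contra.multi_x H2 EW2 Hu0 Hun HC HsC H0 Hl).
Qed.
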